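(* $\mathrm{cov}(\mathcal{M})\leq\mathfrak{s}(\mathbb{R})$.
   Context: $\mathrm{cov}(\mathcal{M})$ is the smallest number of meager subsets of $\mathbb{R}$ whose union is $\mathbb{R}$. For infinite sets $U, A$, say $U$ splits $A$ if both $A\cap U$ and $A\setminus U$ are infinite. $\mathfrak{s}(\mathbb{R})$ is the smallest cardinality of a family $\mathcal{U}$ of open subsets of $\mathbb{R}$ (usual topology) such that every infinite $A\subseteq\mathbb{R}$ is split by some $U\in\mathcal{U}$. *)

(* Defs.v *)
From HB Require Import structures.
From mathcomp Require Import all_boot all_order all_algebra.
From mathcomp Require Import all_classical all_reals all_analysis.
Set Implicit Arguments. Unset Strict Implicit. Unset Printing Implicit Defensive.
Local Open Scope classical_set_scope.

Definition nowhere_dense {T : topologicalType} (A : set T) : Prop :=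
  interior (closure A) = set0.

Definition meager {T : topologicalType} (A : set T) : Prop :=
  exists F : nat -> set T, (forall n, nowhere_dense (F n)) /\
    A `<=` \bigcup_n F n.

Definition infinite_set {T} (A : set T) : Prop := ~ finite_set A.

Definition splits {T} (U A : set T) : Prop :=
  infinite_set (A `&` U) /\ infinite_set (A `\` U).

(* Main.v *)
Require Import Defs.
From HB Require Import structures.
From mathcomp Require Import all_boot all_order all_algebra.
From mathcomp Require Import all_classical all_reals all_analysis.
Import numFieldNormedType.Exports.
Local Open Scope classical_set_scope.
Import Order.TTheory GRing.Theory Num.Theory.

Theorem theorem3p1 (R : realType) (I : Type) (U : I -> set R) :
  (forall i, open (U i)) ->
  (forall A : set R, infinite_set A -> exists i, splits (U i) A) ->
  exists M : I -> set R, (forall i, meager (M i)) /\ \bigcup_i M i = [set: R].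
Proof.
move=> Uo Hs.
exists (fun i => closure (U i) `\` U i); split.
  move=> i; exists (fun _ => closure (U i) `\` U i); split; last first.
    by move=> y Hy; exists 0%N.
  move=> _; rewrite /nowhere_dense.
  have cl : closed (closure (U i) `\` U i).
    by rewrite setDE; apply: closedI; [exact: closed_closure| exact: open_closedC].
  rewrite -(proj1 (closure_id _) cl).
  apply/seteqP; split => // y Hy.
  have Hy' := interior_subset Hy.
  case: Hy' => Hc _.
  have [z [Uz [_ nUz]]] := Hc _ Hy.
  by [].
apply/seteqP; split => // x _.
case: (pselect (exists2 i, setT i & (closure (U i) `\` U i) x)) => // Hno.
exfalso.
pose f (n : nat) : R := (x + n.+1%:R^-1)%R.
pose A := range f.
have fcvg : f @ \oo --> x.
  rewrite -[X in _ --> X](addr0 x); apply: cvgD; [exact: cvg_cst| exact: cvg_harmonic].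
have key : forall W, open W -> W x -> finite_set (A `\` W).
  move=> W oW Wx.
  have : \forall n \near \oo, W (f n) by apply: fcvg; apply: open_nbhs_nbhs; split.
  case=> N _ HN.
  apply: (sub_finite_set _ (finite_image f (finite_II N))).
  move=> y [[n _ <-] nW]; exists n => //=.
  by case: (ltnP n N) => // /HN.
have Ainf : infinite_set A.
  move=> fin; apply: infinite_nat.
  have finj : {in [set: nat] &, injective f}.
    by move=> m n _ _ /addrI/invr_inj/eqP; rewrite eqr_nat => /eqP [].
  have := inj_card_eq finj.
  by move/eq_finite_set => <-.
case: (Hs A Ainf) => i [H1 H2].
case: (pselect (U i x)) => Ux.
  by apply: H2; apply: key.
have ncl : ~ closure (U i) x by move=> c; apply: Hno; exists i.
apply: H1.
apply: (sub_finite_set _ (key (~` closure (U i)) _ ncl)).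
  by move=> y [Ay Uy]; split => // c; apply: c; exact: subset_closure.
by apply: closed_openC; exact: closed_closure.
Qed.
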